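(* Let $A\in\mathbb{Z}^{d_a\times n}$, $B\in\mathbb{Z}^{d_b\times n}$ and $C\in\mathbb{Z}^{s\times n}$ be fixed. For $N\ge1$ let $([A,B],C)^{(N)}$ be the matrix with $Nn+Ns$ columns $$\begin{pmatrix} B & B & \cdots & B & & & & \\ A & & & & & & & \\ & A & & & & & & \\ & & \ddots & & & & & \\ & & & A & & & & \\ C & & & & I_s & & & \\ & C & & & & I_s & & \\ & & \ddots & & & & \ddots & \\ & & & C & & & & I_s\end{pmatrix}$$ (blank entries are zero). Then the encoding length of the Graver basis of $([A,B],C)^{(N)}$ increases only polynomially in $N$.
   Context: For an integer matrix $M$ with $k$ columns and each closed orthant $\mathbb{O}_j$ of $\mathbb{R}^k$, let $H_j$ be the unique minimal set of integer vectors generating $\{z\in\mathbb{O}_j: Mz=0\}\cap\mathbb{Z}^k$ over $\mathbb{Z}_+$. The Graver basis of $M$ is $\bigcup_j H_j\setminus\{0\}$. *)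

(* Defs.v *)
From HB Require Import structures.
From mathcomp Require Import all_boot all_order all_algebra.
Set Implicit Arguments. Unset Strict Implicit. Unset Printing Implicit Defensive.
Import Order.TTheory GRing.Theory Num.Theory.
Local Open Scope ring_scope.

Definition in_orthant (k : nat) (sigma : 'I_k -> bool) (z : 'cV[int]_k) : Prop :=
  forall i : 'I_k, if sigma i then 0 <= z i ord0 else z i ord0 <= 0.

Definition orth_kernel (m k : nat) (M : 'M[int]_(m, k)) (sigma : 'I_k -> bool)
  (z : 'cV[int]_k) : Prop :=
  in_orthant sigma z /\ M *m z = 0.

Definition Zplus_gen (k : nat) (H : 'cV[int]_k -> Prop) (z : 'cV[int]_k) : Prop :=
  exists l : seq 'cV[int]_k, (forall h, h \in l -> H h) /\ z = \sum_(h <- l) h.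

Definition generates (k : nat) (H S : 'cV[int]_k -> Prop) : Prop :=
  forall z, Zplus_gen H z <-> S z.

Definition minimal_generating (k : nat) (H S : 'cV[int]_k -> Prop) : Prop :=
  generates H S /\
  forall H' : 'cV[int]_k -> Prop, (forall z, H' z -> H z) -> generates H' S ->
    forall z, H z -> H' z.

Definition graver (m k : nat) (M : 'M[int]_(m, k)) (z : 'cV[int]_k) : Prop :=
  z != 0 /\
  exists (sigma : 'I_k -> bool) (H : 'cV[int]_k -> Prop),
    minimal_generating H (orth_kernel M sigma) /\ H z.

(* Entry of a matrix accessed with natural-number indices (0 out of range). *)
Definition ent (m k : nat) (M : 'M[int]_(m, k)) (i j : nat) : int :=
  match insub i, insub j with
  | Some i', Some j' => M i' j'
  | _, _ => 0
  end.

(* Rows: d_b rows of [B ... B | 0], then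
   N blocks of d_a rows (block-diagonal A), then N blocks of s rows
   (block-diagonal C | block-diagonal I_s).  Columns: N*n then N*s. *)
Definition bigentry (da db s n : nat) (A : 'M[int]_(da, n)) (B : 'M[int]_(db, n))
  (C : 'M[int]_(s, n)) (N : nat) (r c : nat) : int :=
  if (r < db)%N then
    (if (c < N * n)%N then ent B r (c %% n) else 0)
  else
    let r1 := (r - db)%N in
    if (r1 < N * da)%N then
      (if (c < N * n)%N && (c %/ n == r1 %/ da)%N then ent A (r1 %% da) (c %% n) else 0)
    else
      let r2 := (r1 - N * da)%N in
      if (c < N * n)%N then
        (if (c %/ n == r2 %/ s)%N then ent C (r2 %% s) (c %% n) else 0)
      else (if (c - N * n == r2)%N then 1 else 0).

Definition bigmx (da db s n : nat) (A : 'M[int]_(da, n)) (B : 'M[int]_(db, n))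
  (C : 'M[int]_(s, n)) (N : nat) : 'M[int]_(db + N * da + N * s, N * n + N * s) :=
  \matrix_(i, j) bigentry A B C N i j.

(* Binary encoding length of an integer: 1 (sign) + ceil(log2(|a|+1)). *)
Definition enc_int (a : int) : nat := (1 + up_log 2 (`|a|%N).+1)%N.

Definition enc_vec (k : nat) (z : 'cV[int]_k) : nat := (\sum_(i < k) enc_int (z i ord0))%N.

(* Main.v *)
Require Import Defs.
From HB Require Import structures.
From mathcomp Require Import all_boot all_order all_algebra.
From mathcomp Require Import zify.
From Stdlib Require Import Classical ClassicalEpsilon.
From Stdlib Require List.
Import Order.TTheory GRing.Theory Num.Theory.
Set Implicit Arguments. Unset Strict Implicit. Unset Printing Implicit Defensive.


Definition lek (k : nat) (f g : nat -> nat) := forall j, (j < k)%N -> (f j <= g j)%N.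
Definition eqk (k : nat) (f g : nat -> nat) := forall j, (j < k)%N -> f j = g j.

Definition covered (k : nat) (P : (nat -> nat) -> Prop) :=
  exists l : list (nat -> nat), forall f, P f -> exists h, List.In h l /\ eqk k f h.

Lemma covered_mono k (P Q : (nat -> nat) -> Prop) :
  (forall f, P f -> Q f) -> covered k Q -> covered k P.
Proof. move=> PQ [l Hl]; exists l => f /PQ; exact: Hl. Qed.

Lemma covered_union k (P Q : (nat -> nat) -> Prop) :
  covered k P -> covered k Q -> covered k (fun f => P f \/ Q f).
Proof.
move=> [l1 H1] [l2 H2]; exists (l1 ++ l2)%list => f [/H1|/H2] [h [Hh E]];
  exists h; split => //; apply List.in_or_app; tauto.
Qed.

Lemma covered_bigunion k b (P : nat -> (nat -> nat) -> Prop) :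
  (forall x, (x < b)%N -> covered k (P x)) ->
  covered k (fun f => exists x, (x < b)%N /\ P x f).
Proof.
elim: b => [|b IH] H.
  by exists nil => f [x [//]].
apply: (@covered_mono _ _ (fun f => (exists x, (x < b)%N /\ P x f) \/ P b f)).
  move=> f [x [xb Px]]; case: (ltngtP x b) => [xb'|bx|xe]; last by right; rewrite -xe.
    by left; exists x.
  lia.
apply: covered_union; first by apply: IH => x xb; apply: H; lia.
exact: H.
Qed.

Definition rem_at (j : nat) (f : nat -> nat) := fun t => f (bump j t).
Definition ins_at (j v : nat) (h : nat -> nat) :=
  fun t => if (t < j)%N then h t else if t == j then v else h t.-1.

Lemma dickson k (P : (nat -> nat) -> Prop) :
  (forall f g, P f -> P g -> lek k f g -> eqk k f g) -> covered k P.
Proof.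
elim: k P => [|k IH] P anti.
  case: (classic (exists f, P f)) => [[f0 Pf0]|nP].
    by exists (f0 :: nil) => f _; exists f0; split; [left|].
  by exists nil => f Pf; case: nP; exists f.
case: (classic (exists f, P f)) => [[a Pa]|nP]; last first.
  by exists nil => f Pf; case: nP; exists f.
pose Q j v f := P f /\ f j = v.
have covQ : forall j v, (j < k.+1)%N -> covered k.+1 (Q j v).
  move=> j v jk.
  pose R h := exists f, P f /\ f j = v /\ h = rem_at j f.
  have [l Hl] : covered k R.
    apply: IH => h1 h2 [f1 [P1 [e1 ->]]] [f2 [P2 [e2 ->]]] le12.
    have : eqk k.+1 f1 f2.
      apply: anti => // t tk.
      case: (ltngtP t j) => [tj|jt|->]; last by rewrite e1 e2.
        have := le12 t; rewrite /rem_at /bump; have -> : (j <= t)%N = false by lia.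
        by move=> H; apply: H; lia.
      have := le12 t.-1; rewrite /rem_at /bump; have -> : (j <= t.-1)%N = true by lia.
      by rewrite add1n prednK; [apply; lia|lia].
    move=> E t tk; rewrite /rem_at; apply: E; rewrite /bump; lia.
  exists (map (ins_at j v) l) => f [Pf fj].
  have [h [Hin E]] := Hl (rem_at j f) (ex_intro _ f (conj Pf (conj fj erefl))).
  exists (ins_at j v h); split; first exact: List.in_map.
  move=> t tk; rewrite /ins_at.
  case: ifP => tj.
    rewrite -E; last lia. by rewrite /rem_at /bump; have -> : (j <= t)%N = false by lia.
  case: eqP => [->//|tnj].
  rewrite -E; last lia. rewrite /rem_at /bump; have -> : (j <= t.-1)%N = true by lia.
  by rewrite add1n prednK //; lia.
have cov2 : covered k.+1 (fun f => exists j, (j < k.+1)%N /\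
                 (exists v, (v < a j)%N /\ Q j v f)).
  apply: covered_bigunion => j jk; apply: covered_bigunion => v _; exact: covQ.
have [l Hl] := cov2.
exists (a :: l) => f Pf.
case: (classic (lek k.+1 a f)) => [le|nle].
  exists a; split; first by left.
  by move=> t tk; symmetry; apply: anti.
have [j [jk fj]] : exists j, (j < k.+1)%N /\ (f j < a j)%N.
  apply: NNPP => nex; apply: nle => t tk; apply: NNPP => nt; apply: nex.
  by exists t; split => //; lia.
have [h [Hin E]] := Hl f (ex_intro _ j (conj jk (ex_intro _ (f j) (conj fj (conj Pf erefl))))).
by exists h; split; first by right.
Qed.

Local Open Scope ring_scope.


Definition cfi (a b : int) : bool :=
  if 0 <= b then (0 <= a) && (a <= b) else (b <= a) && (a <= 0).

Lemma cfiP a b : cfi a b <-> ((0 <= b -> 0 <= a <= b) /\ (b <= 0 -> b <= a <= 0)).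
Proof. rewrite /cfi; case: ifP => h; split; move=> H; try lia; case: H; lia. Qed.

Lemma cfi_refl a : cfi a a. Proof. apply/cfiP; lia. Qed.
Lemma cfi_trans a b c : cfi a b -> cfi b c -> cfi a c.
Proof. move=> /cfiP h1 /cfiP h2; apply/cfiP; lia. Qed.
Lemma cfi_sub a b : cfi a b -> cfi (b - a) b.
Proof. move=> /cfiP h1; apply/cfiP; lia. Qed.
Lemma cfi_abs a b : cfi a b -> (`|a| <= `|b|)%N.
Proof. move=> /cfiP h1; lia. Qed.
Lemma cfi_abs_eq a b : cfi a b -> `|a|%N = `|b|%N -> a = b.
Proof. move=> /cfiP h1; lia. Qed.
Lemma cfi_antisym a b : cfi a b -> cfi b a -> a = b.
Proof. move=> /cfiP h1 /cfiP h2; lia. Qed.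
Lemma cfi0 a : cfi a 0 -> a = 0.
Proof. move=> /cfiP; lia. Qed.

Section Conf.
Variable k : nat.
Implicit Types u w : 'cV[int]_k.

Definition cf u w := forall i, cfi (u i ord0) (w i ord0).
Definition nrm w : nat := (\sum_(i < k) `|w i ord0|)%N.

Lemma cf_refl w : cf w w. Proof. by move=> i; apply: cfi_refl. Qed.
Lemma cf_trans u v w : cf u v -> cf v w -> cf u w.
Proof. by move=> h1 h2 i; apply: cfi_trans (h1 i) (h2 i). Qed.
Lemma cf_sub u w : cf u w -> cf (w - u) w.
Proof. by move=> h i; rewrite !mxE; apply: cfi_sub. Qed.
Lemma cf_antisym u w : cf u w -> cf w u -> u = w.
Proof. by move=> h1 h2; apply/matrixP => i j; rewrite !ord1; apply: cfi_antisym. Qed.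

Lemma nrm_le u w : cf u w -> (nrm u <= nrm w)%N.
Proof. by move=> h; apply: leq_sum => i _; apply: cfi_abs. Qed.

Lemma nrm_lt u w : cf u w -> u != w -> (nrm u < nrm w)%N.
Proof.
move=> h neq.
have [i Hi] : exists i, u i ord0 != w i ord0.
  apply: NNPP => nex; move/eqP: neq; apply; apply/matrixP => i j.
  rewrite ord1; apply/eqP; apply: NNPP => H; apply: nex; exists i; exact/negP.
have lt : (`|u i ord0| < `|w i ord0|)%N.
  rewrite ltn_neqAle cfi_abs // andbT; apply/negP => /eqP E.
  by move/eqP: Hi; apply; apply: cfi_abs_eq.
rewrite /nrm (bigD1 i) //= [X in (_ < X)%N](bigD1 i) //=.
rewrite -addSn leq_add //; apply: leq_sum => j _; exact: cfi_abs.
Qed.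

Lemma nrm0 w : nrm w = 0%N -> w = 0.
Proof.
move=> /eqP; rewrite /nrm sum_nat_eq0 => /forallP H.
apply/matrixP => i j; rewrite ord1 mxE; have := H i; rewrite implyTb absz_eq0.
by move/eqP.
Qed.

Lemma cf_neq0 u w : cf u w -> u != 0 -> u != w -> w - u != 0.
Proof. by move=> _ _; rewrite subr_eq0 eq_sym. Qed.

Definition prim (m : nat) (M : 'M[int]_(m, k)) w :=
  w != 0 /\ M *m w = 0 /\ forall u, M *m u = 0 -> u != 0 -> cf u w -> u = w.

Lemma decomp (m : nat) (M : 'M[int]_(m, k)) w : M *m w = 0 ->
  exists l : seq 'cV[int]_k, (forall x, x \in l -> prim M x /\ cf x w) /\
    w = \sum_(x <- l) x.
Proof.
move: {2}(nrm w) (leqnn (nrm w)) => n; elim: n w => [|n IH] w Hn Mw.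
  have -> : w = 0 by apply: nrm0; lia.
  by exists [::]; rewrite big_nil; split.
case: (classic (prim M w)) => [pw|npw].
  exists [:: w]; rewrite big_seq1; split => // x; rewrite inE => /eqP ->.
  by split => //; apply: cf_refl.
case: (eqVneq w 0) => [->|wn0].
  by exists [::]; rewrite big_nil; split.
have [u [Mu [un0 [cfu neq]]]] : exists u, M *m u = 0 /\ u != 0 /\ cf u w /\ u != w.
  apply: NNPP => nex; apply: npw; split => //; split => // u Mu un0 cfu.
  apply: NNPP => ne; apply: nex; exists u; split => //; split => //; split => //.
  exact/eqP.
have h1 := nrm_lt cfu neq.
have cfv := cf_sub cfu.
have vneq : w - u != w by rewrite -subr_eq0 addrAC subrr add0r oppr_eq0.
have h2 := nrm_lt cfv vneq.
have [l1 [H1 E1]] := IH u ltac:(lia) Mu.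
have [l2 [H2 E2]] := IH (w - u) ltac:(lia) ltac:(by rewrite mulmxBr Mw Mu subr0).
exists (l1 ++ l2); split.
  move=> x; rewrite mem_cat => /orP [/H1|/H2] [px cx]; split => //.
    exact: cf_trans cfu.
  exact: cf_trans cfv.
by rewrite big_cat /= -E1 -E2 addrC subrK.
Qed.

Lemma orth_cf (sigma : 'I_k -> bool) (l : seq 'cV[int]_k) :
  (forall x, x \in l -> in_orthant sigma x) ->
  in_orthant sigma (\sum_(x <- l) x) /\ forall x, x \in l -> cf x (\sum_(x <- l) x).
Proof.
elim: l => [|y l IH] H.
  by rewrite big_nil; split => // i; rewrite mxE; case: (sigma i).
have Hl : forall x, x \in l -> in_orthant sigma x.
  by move=> x xl; apply: H; rewrite inE xl orbT.
have [Ho Hc] := IH Hl.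
have Hy := H y (mem_head _ _).
rewrite big_cons; set S := \sum_(j <- l) j.
have {}Ho : in_orthant sigma S := Ho.
have {}Hc : forall x, x \in l -> cf x S := Hc.
split.
  move=> i; have := Ho i; have := Hy i; rewrite mxE; case: (sigma i); move: (y i ord0) (S i ord0) => a b; lia.
move=> x; rewrite inE => /orP [/eqP ->|xl] i.
  have := Ho i; have := Hy i; rewrite mxE; move: (y i ord0) (S i ord0) => a b.
  case: (sigma i) => h1 h2; apply/cfiP; lia.
have := Ho i; have := Hy i; have := Hc x xl i; have := Hl x xl i.
rewrite mxE; move: (x i ord0) (y i ord0) (S i ord0) => a b c.
case: (sigma i) => h0 /cfiP h1 h2 h3; apply/cfiP; lia.
Qed.

Lemma cf_orth (sigma : 'I_k -> bool) u w :
  in_orthant sigma w -> cf u w -> in_orthant sigma u.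
Proof.
move=> Hw Hc i; have := Hw i; have /cfiP := Hc i.
move: (u i ord0) (w i ord0) => a b; case: (sigma i); lia.
Qed.

End Conf.


Lemma graver_prim m k (M : 'M[int]_(m, k)) z : graver M z <-> prim M z.
Proof.
split.
  move=> [zn0 [sigma [H [[gen min] Hz]]]].
  set S := orth_kernel M sigma.
  have HS : forall x, H x -> S x.
    move=> x Hx; apply/gen; exists [:: x]; rewrite big_seq1; split => // y.
    by rewrite inE => /eqP ->.
  have [Oz Mz] := HS z Hz.
  split => //; split => // u Mu un0 cfu.
  apply: NNPP => neq.
  have Su : S u by split => //; apply: cf_orth Oz cfu.
  have cfv := cf_sub cfu.
  have Sv : S (z - u) by split; [apply: cf_orth Oz cfv|rewrite mulmxBr Mz Mu subr0].
  have ltu : (nrm u < nrm z)%N by apply: nrm_lt => //; apply/eqP.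
  have vneq : z - u != z by rewrite -subr_eq0 addrAC subrr add0r oppr_eq0.
  have ltv : (nrm (z - u) < nrm z)%N by apply: nrm_lt.
  have dec : forall v, S v -> (nrm v < nrm z)%N ->
      exists l, (forall x, x \in l -> H x /\ x <> z) /\ v = \sum_(x <- l) x.
    move=> v Sv' lt; have [l [Hl E]] := (gen v).2 Sv'.
    exists l; split => // x xl; split; first exact: Hl.
    have Ol : forall x, x \in l -> in_orthant sigma x by move=> y /Hl /HS [].
    have [_ Hc] := orth_cf Ol; have := nrm_le (Hc x xl); rewrite -E => le.
    by move=> exz; move: le; rewrite exz; lia.
  have [lu [Hlu Eu]] := dec u Su ltu.
  have [lv [Hlv Ev]] := dec _ Sv ltv.
  pose H' y := H y /\ y <> z.
  have gen' : generates H' S.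
    move=> y; split.
      by move=> [l [Hl E]]; apply/gen; exists l; split => // x /Hl [].
    move=> /gen [l [Hl E]].
    exists (flatten [seq if x == z then lu ++ lv else [:: x] | x <- l]); split.
      move=> x /flattenP [s /mapP [x0 x0l ->]].
      case: eqP => [_|ne]; first by rewrite mem_cat => /orP [/Hlu|/Hlv].
      by rewrite inE => /eqP ->; split => //; apply: Hl.
    rewrite big_flatten /= big_map E; apply: eq_bigr => x _.
    case: eqP => [->|_]; last by rewrite big_seq1.
    by rewrite big_cat /= -Eu -Ev addrC subrK.
  by have [] := min H' (fun x (hx : H' x) => proj1 hx) gen' z Hz.
move=> [zn0 [Mz pz]].
pose sigma := fun i : 'I_k => (0 <= z i ord0).
pose H x := in_orthant sigma x /\ prim M x.
have Oz : in_orthant sigma z.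
  move=> i; rewrite /sigma; case: ifP => //; move: (z i ord0) => a; lia.
split => //; exists sigma, H; split; last by split => //; split.
have gen : generates H (orth_kernel M sigma).
  move=> y; split.
    move=> [l [Hl ->]]; split.
      by apply: (orth_cf (fun x xl => (Hl x xl).1)).1.
    rewrite mulmx_sumr big_seq big1 // => x /Hl [_ [_ [Mx _]]]; exact: Mx.
  move=> [Oy My]; have [l [Hl E]] := decomp My.
  exists l; split => // x xl; have [px cx] := Hl x xl; split => //.
  exact: cf_orth Oy cx.
split => // H' sub gen' x Hx.
have [Ox px] := Hx.
have Sx : orth_kernel M sigma x by split => //; case: px => _ [].
have [l [Hl E]] := (gen' x).2 Sx.
case: l Hl E => [|e l] Hl E.
  by case: px => /eqP; rewrite E big_nil.
have He := Hl e (mem_head _ _).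
have [Oe [en0 [Me _]]] := sub e He.
have Ol : forall y, y \in e :: l -> in_orthant sigma y by move=> y /Hl /sub [].
have [_ Hc] := orth_cf Ol.
have cex : cf e x by rewrite E; apply: Hc; apply: mem_head.
have <- // : e = x.
by case: px => _ [_]; apply.
Qed.


Lemma entE a b (M : 'M[int]_(a, b)) (i : 'I_a) (j : 'I_b) : ent M i j = M i j.
Proof. by rewrite /ent !valK. Qed.

Lemma entN1 a b (M : 'M[int]_(a, b)) i j : (a <= i)%N -> ent M i j = 0.
Proof. by move=> h; rewrite /ent insubN // -leqNgt. Qed.

Lemma entN2 a b (M : 'M[int]_(a, b)) i j : (b <= j)%N -> ent M i j = 0.
Proof. by move=> h; rewrite /ent; case: insub => // ?; rewrite insubN // -leqNgt. Qed.

Definition vat p (v : 'cV[int]_p) (j : nat) : int := ent v j 0.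

Lemma vatE p (v : 'cV[int]_p) (j : 'I_p) : vat v j = v j ord0.
Proof. exact: (entE v j ord0). Qed.

Lemma vatN p (v : 'cV[int]_p) j : (p <= j)%N -> vat v j = 0.
Proof. exact: entN1. Qed.

Lemma vat0 p j : vat (0 : 'cV[int]_p) j = 0.
Proof.
case: (ltnP j p) => h; last exact: vatN.
by rewrite (vatE _ (Ordinal h)) mxE.
Qed.

Lemma vatD p (u v : 'cV[int]_p) j : vat (u + v) j = vat u j + vat v j.
Proof.
case: (ltnP j p) => h; last by rewrite !vatN.
by rewrite !(vatE _ (Ordinal h)) mxE.
Qed.

Lemma vatB p (u v : 'cV[int]_p) j : vat (u - v) j = vat u j - vat v j.
Proof.
case: (ltnP j p) => h; last by rewrite !vatN // subr0.
by rewrite !(vatE _ (Ordinal h)) !mxE.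
Qed.

Lemma vat_sum p I (l : seq I) (P : pred I) (F : I -> 'cV[int]_p) j :
  vat (\sum_(x <- l | P x) F x) j = \sum_(x <- l | P x) vat (F x) j.
Proof.
elim: l => [|x l IH]; first by rewrite !big_nil vat0.
by rewrite !big_cons; case: (P x); rewrite ?vatD IH.
Qed.

Lemma vat_eq p (u v : 'cV[int]_p) : (forall j, (j < p)%N -> vat u j = vat v j) -> u = v.
Proof.
move=> h; apply/matrixP => i j; rewrite ord1 -!vatE; exact: h.
Qed.

Lemma cf_vat p (u w : 'cV[int]_p) j : cf u w -> cfi (vat u j) (vat w j).
Proof.
move=> h; case: (ltnP j p) => hj; last by rewrite !vatN //; apply: cfi_refl.
by rewrite !(vatE _ (Ordinal hj)); apply: h.
Qed.

Lemma cf_vatP p (u w : 'cV[int]_p) : (forall j, (j < p)%N -> cfi (vat u j) (vat w j)) -> cf u w.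
Proof. by move=> h i; rewrite -!vatE; apply: h. Qed.

Lemma mulmx_vat a p (M : 'M[int]_(a, p)) (w : 'cV[int]_p) (r : 'I_a) :
  (M *m w) r ord0 = \sum_(0 <= j < p) ent M r j * vat w j.
Proof.
rewrite mxE big_mkord; apply: eq_bigr => j _; by rewrite entE vatE.
Qed.

Section Sums.
Variable V : nmodType.

Lemma sum_split (F : nat -> V) a b :
  \sum_(0 <= c < a + b) F c = \sum_(0 <= c < a) F c + \sum_(0 <= c < b) F (a + c)%N.
Proof.
rewrite (@big_cat_nat _ _ _ a) //=; last by rewrite leq_addr.
congr (_ + _).
rewrite -{1}(add0n a) big_addn addKn; apply: eq_bigr => i _; by rewrite addnC.
Qed.

Lemma sum_blocks (F : nat -> V) N n :
  \sum_(0 <= c < N * n) F c = \sum_(0 <= i < N) \sum_(0 <= j < n) F (i * n + j)%N.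
Proof.
elim: N => [|N IH]; first by rewrite mul0n !big_geq.
by rewrite mulSnr sum_split IH big_nat_recr.
Qed.

Lemma sum_one (F : nat -> V) x b : (x < b)%N ->
  \sum_(0 <= c < b) (if c == x then F c else 0) = F x.
Proof. by move=> h; rewrite -big_mkcond big_nat1_eq /= h. Qed.

End Sums.


Section Big.
Variables (da db s n : nat) (A : 'M[int]_(da, n)) (B : 'M[int]_(db, n))
  (C : 'M[int]_(s, n)) (N : nat).

Local Notation k := (N * n + N * s)%N.
Local Open Scope nat_scope.

Definition brick (z : 'cV[int]_k) (i : nat) : 'cV[int]_(n + s) :=
  \col_j (if (j < n)%N then vat z (i * n + j) else vat z (N * n + i * s + (j - n))).

Definition unbrick (f : nat -> 'cV[int]_(n + s)) : 'cV[int]_k :=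
  \col_c (if (c < N * n)%N then vat (f (c %/ n)) (c %% n)
          else vat (f ((c - N * n) %/ s)) (n + (c - N * n) %% s)).

Lemma vat_brick1 z i j : (j < n)%N -> vat (brick z i) j = vat z (i * n + j).
Proof.
move=> h; have h' : (j < n + s)%N by lia.
by rewrite (vatE _ (Ordinal h')) mxE /= h.
Qed.

Lemma vat_brick2 z i t : (t < s)%N -> vat (brick z i) (n + t) = vat z (N * n + i * s + t).
Proof.
move=> h; have h' : (n + t < n + s)%N by lia.
rewrite (vatE _ (Ordinal h')) mxE /=; case: ifP => [|_]; first lia.
by rewrite addKn.
Qed.

Lemma vat_unbrick1 f c : (c < N * n)%N -> vat (unbrick f) c = vat (f (c %/ n)) (c %% n).
Proof.
move=> h; have h' : (c < k)%N by lia.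
by rewrite (vatE _ (Ordinal h')) mxE /= h.
Qed.

Lemma vat_unbrick2 f c : (c < N * s)%N ->
  vat (unbrick f) (N * n + c) = vat (f (c %/ s)) (n + c %% s).
Proof.
move=> h; have h' : (N * n + c < k)%N by lia.
rewrite (vatE _ (Ordinal h')) mxE /=; case: ifP => [|_]; first lia.
by rewrite addKn.
Qed.

Lemma brick_unbrick f i : (i < N)%N -> brick (unbrick f) i = f i.
Proof.
move=> hi; apply: vat_eq => j hj.
case: (ltnP j n) => hjn.
  rewrite vat_brick1 // vat_unbrick1; last by nia.
  have -> : ((i * n + j) %/ n = i)%N.
    by rewrite divnMDl ?divn_small ?addn0 //; lia.
  by rewrite modnMDl modn_small.
have -> : j = (n + (j - n))%N by lia.
rewrite vat_brick2; last by lia.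
rewrite -addnA vat_unbrick2; last by nia.
have -> : ((i * s + (j - n)) %/ s = i)%N.
  by rewrite divnMDl ?divn_small ?addn0 //; lia.
rewrite modnMDl modn_small; last by lia.
by rewrite subnKC.
Qed.

Lemma unbrick_brick z : unbrick (brick z) = z.
Proof.
apply: vat_eq => c hc.
case: (ltnP c (N * n)) => h.
  rewrite vat_unbrick1 // vat_brick1; last by nia.
  by have <- : c = (c %/ n * n + c %% n)%N by nia.
have -> : c = (N * n + (c - N * n))%N by lia.
rewrite vat_unbrick2; last by lia.
rewrite vat_brick2; last by nia.
by rewrite -addnA; have <- : (c - N * n = (c - N * n) %/ s * s + (c - N * n) %% s)%N by nia.
Qed.

Lemma unbrick_ext f g : (forall i, (i < N)%N -> f i = g i) -> unbrick f = unbrick g.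
Proof.
move=> h; apply/matrixP => c j; rewrite !mxE; case: ifP => hc.
  by rewrite h //; nia.
by rewrite h //; have := ltn_ord c; nia.
Qed.

Lemma brickB z z' i : brick (z - z')%R i = (brick z i - brick z' i)%R.
Proof. by apply/matrixP => j t; rewrite !mxE; case: ifP => _; rewrite vatB. Qed.

Lemma brick0 i : brick 0%R i = 0%R.
Proof. by apply/matrixP => j t; rewrite !mxE; case: ifP => _; rewrite vat0. Qed.

Lemma cf_brick u z i : cf u z -> cf (brick u i) (brick z i).
Proof. by move=> h j; rewrite !mxE; case: ifP => _; apply: cf_vat. Qed.

Lemma cf_bricks u z : (forall i, (i < N)%N -> cf (brick u i) (brick z i)) -> cf u z.
Proof.
move=> h; rewrite -(unbrick_brick u) -(unbrick_brick z).
move=> c; rewrite !mxE; case: ifP => hc; apply: cf_vat; apply: h.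
  by nia.
by have := ltn_ord c; nia.
Qed.

Lemma brick_nz z : z != 0%R -> exists2 i, (i < N)%N & brick z i != 0%R.
Proof.
move=> zn; apply: NNPP => nex; move/eqP: zn; apply.
rewrite -(unbrick_brick z) (@unbrick_ext _ (fun _ => 0%R)).
  by apply/matrixP => c j; rewrite !mxE; case: ifP; rewrite vat0.
move=> i hi; apply/eqP; apply: NNPP => ne; apply: nex; exists i => //; exact/negP.
Qed.


Definition Dent (r j : nat) : int :=
  if r < da then (if j < n then ent A r j else 0%R)
  else if j < n then ent C (r - da) j else (if j - n == r - da then 1%R else 0%R).
Definition Dm : 'M[int]_(da + s, n + s) := \matrix_(r, j) Dent r j.
Definition Bpm : 'M[int]_(db, n + s) := \matrix_(r, j) (if j < n then ent B r j else 0%R).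

Lemma entDm r j : r < da + s -> j < n + s -> ent Dm r j = Dent r j.
Proof. by move=> hr hj; rewrite (entE _ (Ordinal hr) (Ordinal hj)) mxE. Qed.

Lemma Dm_top w (a : 'I_(da + s)) : a < da ->
  (Dm *m w) a ord0 = (\sum_(0 <= j < n) ent A a j * vat w j)%R.
Proof.
move=> ha; rewrite mulmx_vat sum_split [X in (_ + X)%R]big1 ?addr0; last first.
  move=> t _; case: (ltnP (n + t) (n + s)) => ht; last by rewrite entN2 // mul0r.
  by rewrite entDm // /Dent ha; case: ifP => [|_]; [lia|rewrite mul0r].
apply: eq_big_nat => j hj; rewrite entDm //; last by lia.
by rewrite /Dent ha; case: ifP => //; lia.
Qed.

Lemma Dm_bot w (a : 'I_(da + s)) : da <= a ->
  (Dm *m w) a ord0 = (\sum_(0 <= j < n) ent C (a - da) j * vat w j + vat w (n + (a - da)))%R.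
Proof.
move=> ha; rewrite mulmx_vat sum_split; congr (_ + _)%R.
  apply: eq_big_nat => j hj; rewrite entDm //; last by lia.
  by rewrite /Dent; case: ifP => [|_]; [lia|]; case: ifP => //; lia.
rewrite -(@sum_one _ (fun t => vat w (n + t)) (a - da) s); last by have := ltn_ord a; lia.
apply: eq_big_nat => t ht; rewrite entDm //; last by lia.
rewrite /Dent; case: ifP => [|_]; first lia.
case: ifP => [|_]; first lia.
by rewrite addKn; case: eqP; rewrite ?mul1r ?mul0r.
Qed.

Lemma Bpm_mul w (r : 'I_db) :
  (Bpm *m w) r ord0 = (\sum_(0 <= j < n) ent B r j * vat w j)%R.
Proof.
rewrite mulmx_vat sum_split [X in (_ + X)%R]big1 ?addr0; last first.
  move=> t _; case: (ltnP (n + t) (n + s)) => ht; last by rewrite entN2 // mul0r.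
  by rewrite (entE _ r (Ordinal ht)) mxE /=; case: ifP => [|_]; [lia|rewrite mul0r].
apply: eq_big_nat => j hj.
have hj' : j < n + s by lia.
have hjn : j < n by lia.
by rewrite (entE _ r (Ordinal hj')) mxE /= hjn.
Qed.


Local Notation BM := (bigmx A B C N).
Local Notation BE := (bigentry A B C N).

Lemma rowE z (r : 'I_(db + N * da + N * s)) :
  (BM *m z) r ord0 = (\sum_(0 <= c < k) BE r c * vat z c)%R.
Proof.
rewrite mulmx_vat; apply: eq_big_nat => c hc.
have hc' : c < k by lia.
by rewrite (entE _ r (Ordinal hc')) mxE.
Qed.

Lemma rowB (z : 'cV[int]_k) r : r < db ->
  (\sum_(0 <= c < k) BE r c * vat z c)%R =
  (\sum_(0 <= i < N) \sum_(0 <= j < n) ent B r j * vat z (i * n + j))%R.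
Proof.
move=> hr; rewrite sum_split [X in (_ + X)%R]big1 ?addr0; last first.
  by move=> c _; rewrite /bigentry hr; case: ifP => [|_]; [lia|rewrite mul0r].
rewrite sum_blocks; apply: eq_big_nat => i hi; apply: eq_big_nat => j hj.
rewrite /bigentry hr; case: ifP => [_|]; last by nia.
by rewrite modnMDl modn_small //; lia.
Qed.

Lemma rowA (z : 'cV[int]_k) x : x < N * da ->
  (\sum_(0 <= c < k) BE (db + x) c * vat z c)%R =
  (\sum_(0 <= j < n) ent A (x %% da) j * vat z (x %/ da * n + j))%R.
Proof.
move=> hx; rewrite sum_split [X in (_ + X)%R]big1 ?addr0; last first.
  move=> c _; rewrite /bigentry; case: ifP => [|_]; first lia.
  by rewrite addKn hx; case: ifP => [|_]; [lia|rewrite mul0r].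
rewrite sum_blocks.
rewrite (eq_big_nat _ _ (F2 := fun i => if i == x %/ da then
   (\sum_(0 <= j < n) ent A (x %% da) j * vat z (i * n + j))%R else 0%R)).
  by rewrite sum_one //; nia.
move=> i hi; case: eqP => [e|ne].
  apply: eq_big_nat => j hj; rewrite /bigentry; case: ifP => [|_]; first lia.
  rewrite addKn hx; case: ifP => [_|]; last first.
    have -> : (i * n + j) %/ n = i by rewrite divnMDl ?divn_small ?addn0 //; lia.
    by rewrite e eqxx andbT; nia.
  by rewrite modnMDl (@modn_small j n) //; lia.
apply: big1_seq => j; rewrite mem_index_iota => hj.
rewrite /bigentry; case: ifP => [|_]; first lia.
rewrite addKn hx; case: ifP => [|_]; last by rewrite mul0r.
have -> : (i * n + j) %/ n = i by rewrite divnMDl ?divn_small ?addn0 //; lia.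
by move/andP => [_ /eqP].
Qed.

Lemma rowC (z : 'cV[int]_k) y : y < N * s ->
  (\sum_(0 <= c < k) BE (db + N * da + y) c * vat z c)%R =
  (\sum_(0 <= j < n) ent C (y %% s) j * vat z (y %/ s * n + j) + vat z (N * n + y))%R.
Proof.
move=> hy; rewrite sum_split; congr (_ + _)%R; last first.
  rewrite -(@sum_one _ (fun c => vat z (N * n + c)) y (N * s)) //.
  apply: eq_big_nat => c hc; rewrite /bigentry; case: ifP => [|_]; first lia.
  case: ifP => [|_]; first lia.
  case: ifP => [|_]; first lia.
  have -> : N * n + c - N * n = c by lia.
  have -> : db + N * da + y - db - N * da = y by lia.
  by case: eqP; rewrite ?mul1r ?mul0r.
rewrite sum_blocks.
rewrite (eq_big_nat _ _ (F2 := fun i => if i == y %/ s then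
   (\sum_(0 <= j < n) ent C (y %% s) j * vat z (i * n + j))%R else 0%R)).
  by rewrite sum_one //; nia.
have e1 : db + N * da + y - db - N * da = y by lia.
move=> i hi; case: eqP => [e|ne].
  apply: eq_big_nat => j hj; rewrite /bigentry; case: ifP => [|_]; first lia.
  case: ifP => [|_]; first lia.
  case: ifP => [_|]; last by nia.
  rewrite e1; have -> : (i * n + j) %/ n = i by rewrite divnMDl ?divn_small ?addn0 //; lia.
  by rewrite e eqxx modnMDl (@modn_small j n) //; lia.
apply: big1_seq => j; rewrite mem_index_iota => hj.
rewrite /bigentry; case: ifP => [|_]; first lia.
case: ifP => [|_]; first lia.
case: ifP => [_|]; last by nia.
rewrite e1; have -> : (i * n + j) %/ n = i by rewrite divnMDl ?divn_small ?addn0 //; lia.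
by case: eqP => // _; rewrite mul0r.
Qed.


Lemma Dbrick_top (z : 'cV[int]_k) i (a : 'I_(da + s)) : a < da ->
  (Dm *m brick z i) a ord0 = (\sum_(0 <= j < n) ent A a j * vat z (i * n + j))%R.
Proof.
move=> ha; rewrite Dm_top //; apply: eq_big_nat => j hj; rewrite vat_brick1 //; lia.
Qed.

Lemma Dbrick_bot (z : 'cV[int]_k) i (a : 'I_(da + s)) : da <= a ->
  (Dm *m brick z i) a ord0 = (\sum_(0 <= j < n) ent C (a - da) j * vat z (i * n + j)
     + vat z (N * n + i * s + (a - da)))%R.
Proof.
move=> ha; rewrite Dm_bot // vat_brick2; last by have := ltn_ord a; lia.
congr (_ + _)%R; apply: eq_big_nat => j hj; rewrite vat_brick1 //; lia.
Qed.

Lemma Bbrick (z : 'cV[int]_k) (r : 'I_db) :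
  (\sum_(i < N) Bpm *m brick z i)%R r ord0 =
  (\sum_(0 <= i < N) \sum_(0 <= j < n) ent B r j * vat z (i * n + j))%R.
Proof.
rewrite summxE big_mkord; apply: eq_bigr => i _; rewrite Bpm_mul.
apply: eq_big_nat => j hj; rewrite vat_brick1 //; lia.
Qed.

Lemma bigker (z : 'cV[int]_k) : BM *m z = 0%R <->
  (forall i, i < N -> Dm *m brick z i = 0%R) /\ (\sum_(i < N) Bpm *m brick z i = 0)%R.
Proof.
split.
  move=> H.
  have R : forall r : 'I_(db + N * da + N * s),
      (\sum_(0 <= c < k) BE r c * vat z c)%R = 0%R.
    by move=> r; rewrite -rowE H mxE.
  split.
    move=> i hi; apply/matrixP => a t; rewrite ord1 [RHS]mxE.
    case: (ltnP a da) => ha.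
      rewrite Dbrick_top //.
      have hr : db + (i * da + a) < db + N * da + N * s by nia.
      have := R (Ordinal hr); rewrite /= rowA; last by nia.
      have -> : (i * da + a) %% da = a by rewrite modnMDl modn_small.
      by have -> : (i * da + a) %/ da = i by rewrite divnMDl ?divn_small ?addn0 //; lia.
    have hs : a - da < s by have := ltn_ord a; lia.
    rewrite Dbrick_bot //.
    have hr : db + N * da + (i * s + (a - da)) < db + N * da + N * s by nia.
    have := R (Ordinal hr); rewrite /= rowC; last by nia.
    have -> : (i * s + (a - da)) %% s = a - da by rewrite modnMDl modn_small.
    have -> : (i * s + (a - da)) %/ s = i by rewrite divnMDl ?divn_small ?addn0 //; lia.
    by rewrite addnA.
  apply/matrixP => r t; rewrite ord1 [RHS]mxE Bbrick.
  have hr : r < db + N * da + N * s by have := ltn_ord r; lia.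
  by have := R (Ordinal hr); rewrite /= rowB.
move=> [H1 H2]; apply/matrixP => r t; rewrite ord1 [RHS]mxE rowE.
have hr := ltn_ord r.
case: (ltnP r db) => hrb.
  rewrite rowB //.
  have := congr1 (fun M : 'M[int]_(db, 1) => M (Ordinal hrb) ord0) H2.
  by rewrite /= Bbrick mxE.
case: (ltnP (r - db) (N * da)) => hx.
  have -> : (r : nat) = db + (r - db) by lia.
  rewrite rowA //.
  have hi : (r - db) %/ da < N by nia.
  have hada : (r - db) %% da < da by apply: ltn_pmod; nia.
  have ha : (r - db) %% da < da + s by lia.
  have := congr1 (fun M : 'cV[int]_(da + s) => M (Ordinal ha) ord0) (H1 _ hi).
  by rewrite /= Dbrick_top ?mxE.
have hy : r - db - N * da < N * s by lia.
have -> : (r : nat) = db + N * da + (r - db - N * da) by lia.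
rewrite rowC //.
set y := r - db - N * da.
have hi : y %/ s < N by nia.
have s0 : 0 < s by nia.
have ht : da + y %% s < da + s by have := ltn_pmod y s0; lia.
have := congr1 (fun M : 'cV[int]_(da + s) => M (Ordinal ht) ord0) (H1 _ hi).
rewrite /= Dbrick_bot ?mxE /=; last by lia.
by rewrite addKn -addnA -divn_eq.
Qed.

End Big.


Section Masks.
Variable X : eqType.

Lemma mask_compl (V : nmodType) (T : seq X) msk (P : pred X) (F : X -> V) :
  size msk = size T ->
  \sum_(x <- mask msk T | P x) F x + \sum_(x <- mask (map negb msk) T | P x) F x
  = \sum_(x <- T | P x) F x.
Proof.
elim: T msk => [|y T IH] [|b msk] //= e; first by rewrite !big_nil addr0.
case: e => e; case: b; rewrite /= !big_cons; case: (P y); rewrite -(IH msk e) //.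
  by rewrite addrA.
by rewrite addrCA.
Qed.

Lemma count_compl (T : seq X) msk (P : pred X) : size msk = size T ->
  (count P (mask msk T) + count P (mask (map negb msk) T) = count P T)%N.
Proof.
elim: T msk => [|y T IH] [|b msk] //= e.
case: e => e; have := IH msk e; by case: b => /=; case: (P y) => /=; lia.
Qed.

Lemma select (Y : eqType) (kf : X -> Y) (T : seq X) (mu : Y -> nat) :
  (forall y, mu y <= count (fun p => kf p == y) T)%N ->
  exists msk, size msk = size T /\
     forall y, count (fun p => kf p == y) (mask msk T) = mu y.
Proof.
elim: T mu => [|x T IH] mu H.
  exists [::]; split => // y; have := H y; rewrite /=; lia.
case: (posnP (mu (kf x))) => hx.
  have Hmu : forall y, (mu y <= count (fun p => kf p == y) T)%N.
    move=> y; have := H y; rewrite /=; case: eqP => [<-|_]; last by [].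
    by rewrite hx.
  have [msk [e Hm]] := IH mu Hmu.
  by exists (false :: msk); split; rewrite /= ?e.
pose mu' y := if y == kf x then (mu y).-1 else mu y.
have Hmu : forall y, (mu' y <= count (fun p => kf p == y) T)%N.
  move=> y; have := H y; rewrite /mu' /=; case: eqP => [->|ne].
    by rewrite eqxx /=; lia.
  by case: eqP => // E; case: ne.
have [msk [e Hm]] := IH mu' Hmu.
exists (true :: msk); split; first by rewrite /= e.
move=> y; rewrite /= Hm /mu'; case: eqP => [<-|ne].
  by rewrite eqxx /=; lia.
by case: eqP => // E; case: ne.
Qed.

Lemma sum_sign (T : seq X) (P : pred X) (f : X -> int) (W : int) :
  (forall x, x \in T -> P x -> cfi (f x) W) ->
  (0 <= W -> 0 <= \sum_(x <- T | P x) f x) /\ (W <= 0 -> \sum_(x <- T | P x) f x <= 0).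
Proof.
elim: T => [|y T IH] H; first by rewrite big_nil.
have {IH} [h1 h2] := IH (fun x xT => H x (mem_behead (s := y :: T) xT)).
rewrite big_cons; case: ifP => Py //.
have /cfiP := H y (mem_head _ _) Py.
move: (f y) (\sum_(x <- T | P x) f x) h1 h2 => a b; lia.
Qed.

Lemma sum_ge_item (T : seq X) (P : pred X) (f : X -> int) x0 :
  x0 \in T -> P x0 -> (forall x, x \in T -> P x -> 0 <= f x) ->
  f x0 <= \sum_(x <- T | P x) f x.
Proof.
elim: T => [|y T IH] //= xin Px0 H.
have H' : forall x, x \in T -> P x -> 0 <= f x.
  by move=> x xT; apply: H; rewrite inE xT orbT.
have s0 : 0 <= \sum_(x <- T | P x) f x.
  rewrite big_seq_cond; apply: sumr_ge0 => x /andP [] /H'; exact.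
rewrite big_cons; move: xin; rewrite inE => /orP [/eqP e|xT].
  by rewrite -e Px0 lerDl; exact: s0.
have := IH xT Px0 H'; case: ifP => Py // h; apply: (le_trans h).
by rewrite lerDr; apply: H => //; exact: mem_head.
Qed.

Lemma subsum_cf p (T : seq X) msk (P : pred X) (F : X -> 'cV[int]_p) w :
  size msk = size T -> (forall x, x \in T -> P x -> cf (F x) w) ->
  \sum_(x <- T | P x) F x = w -> cf (\sum_(x <- mask msk T | P x) F x) w.
Proof.
move=> sz H E; apply: cf_vatP => j _.
have e2 := congr1 (fun v => vat v j) E.
rewrite /= -(mask_compl _ _ sz) vatD !vat_sum in e2.
rewrite vat_sum.
have Hm : forall b, (forall x, x \in mask b T -> P x -> cfi (vat (F x) j) (vat w j)).
  by move=> b x /mem_mask xT Px; apply: cf_vat; apply: H.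
have [a1 a2] := sum_sign (Hm msk).
have [b1 b2] := sum_sign (Hm (map negb msk)).
move: e2 a1 a2 b1 b2.
set a := \sum_(x <- mask msk T | P x) vat (F x) j.
set b := \sum_(x <- mask (map negb msk) T | P x) vat (F x) j.
clearbody a b; move: (vat w j) => W h1 h2 h3 h4 e; apply/cfiP; lia.
Qed.

Lemma sum_nz p (T : seq X) (P : pred X) (F : X -> 'cV[int]_p) w x0 :
  x0 \in T -> P x0 -> F x0 != 0 -> (forall x, x \in T -> P x -> cf (F x) w) ->
  \sum_(x <- T | P x) F x != 0.
Proof.
move=> xT Px0 nz H.
have [j hj] : exists j, vat (F x0) j != 0.
  apply: NNPP => nex; move/eqP: nz; apply; apply: vat_eq => j _; rewrite vat0.
  by case: (vat (F x0) j =P 0) => // ne; case: nex; exists j; apply/eqP.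
apply/negP => /eqP E; have e2 := congr1 (fun v => vat v j) E.
rewrite /= vat_sum vat0 in e2.
have Hc : forall x, x \in T -> P x -> cfi (vat (F x) j) (vat w j).
  by move=> x xT' Px; apply: cf_vat; apply: H.
have /cfiP c0 := Hc x0 xT Px0.
have /eqP hj' := hj.
case: (lerP 0 (vat w j)) => hW.
  have H' : forall x, x \in T -> P x -> 0 <= vat (F x) j.
    by move=> x xT' Px; have /cfiP := Hc x xT' Px; move: (vat (F x) j) (vat w j) hW; lia.
  have h1 := @sum_ge_item T P (fun x => vat (F x) j) x0 xT Px0 H'.
  move: h1 e2 c0 hj' hW => /=.
  set S := \sum_(x <- T | P x) vat (F x) j; clearbody S.
  move: (vat (F x0) j) (vat w j) => a W; lia.
have H' : forall x, x \in T -> P x -> 0 <= - vat (F x) j.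
  by move=> x xT' Px; have /cfiP := Hc x xT' Px; move: (vat (F x) j) (vat w j) hW; lia.
have h1 := @sum_ge_item T P (fun x => - vat (F x) j) x0 xT Px0 H'.
move: h1 e2 c0 hj' hW => /=; rewrite sumrN.
set S := \sum_(x <- T | P x) vat (F x) j; clearbody S.
move: (vat (F x0) j) (vat w j) => a W; lia.
Qed.

End Masks.


Definition posp (a : int) : nat := if 0 <= a then `|a|%N else 0%N.
Definition negp (a : int) : nat := if a < 0 then `|a|%N else 0%N.

Lemma cfi_parts a b : (posp a <= posp b)%N -> (negp a <= negp b)%N -> cfi a b.
Proof.
rewrite /posp /negp => h1 h2; apply/cfiP.
move: h1 h2; case: ifP => h3; case: ifP => h4; case: ifP => h5; case: ifP => h6; lia.
Qed.

Lemma posp_negp a : (posp a)%:Z - (negp a)%:Z = a.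
Proof. rewrite /posp /negp; case: ifP => h1; case: ifP => h2; lia. Qed.

Lemma in_map_list (A : Type) (B : eqType) (f : A -> B) (h : A) (l : list A) :
  List.In h l -> f h \in map f l.
Proof.
elim: l => [|x l IH] //= [->|/IH]; first by rewrite mem_head.
by move=> H; rewrite inE H orbT.
Qed.

Lemma prims_finite (m p : nat) (M : 'M[int]_(m, p)) :
  exists GL : seq 'cV[int]_p, forall w, prim M w -> w \in GL.
Proof.
pose enc (w : 'cV[int]_p) : nat -> nat :=
  fun j => if (j < p)%N then posp (vat w j) else negp (vat w (j - p)).
pose dec (f : nat -> nat) : 'cV[int]_p := \col_i ((f i)%:Z - (f (p + i)%N)%:Z).
have [l Hl] : covered (p + p) (fun f => exists w, prim M w /\ f = enc w).
  apply: dickson => f g [u [pu ->]] [w [pw ->]] le.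
  have cuw : cf u w.
    apply: cf_vatP => j hj; apply: cfi_parts.
      by have := le j; rewrite /enc hj; apply; lia.
    have := le (p + j)%N; rewrite /enc; case: ifP => [|_]; first lia.
    by rewrite addKn; apply; lia.
  by case: pw => _ [_ H]; rewrite (H u) //; case: pu => [? []].
exists (map dec l) => w pw.
have [h [Hin E]] := Hl (enc w) (ex_intro _ w (conj pw erefl)).
have -> : w = dec h.
  apply/matrixP => i j; rewrite ord1 mxE; have hi := ltn_ord i.
  rewrite -!E; try lia.
  rewrite /enc ltn_ord; case: ifP => [|_]; first lia.
  by rewrite addKn -!vatE posp_negp.
exact: (in_map_list dec Hin).
Qed.


Section Counting.
Variables (Y : eqType) (GL : seq Y) (y0 : Y).
Hypothesis uGL : uniq GL.

Lemma sum_ind (V : nmodType) y (F : Y -> V) : y \in GL ->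
  \sum_(q < size GL) (if y == nth y0 GL q then F (nth y0 GL q) else 0) = F y.
Proof.
move=> yin; have hq : (index y GL < size GL)%N by rewrite index_mem.
rewrite (bigD1 (Ordinal hq)) //= nth_index // eqxx big1 ?addr0 // => q nq.
case: eqP => // e; case/negP: nq; apply/eqP; apply: val_inj => /=.
by rewrite e index_uniq.
Qed.

Lemma sum_indn y : y \in GL ->
  (\sum_(q < size GL) (y == nth y0 GL q))%N = 1%N.
Proof.
move=> yin; have hq : (index y GL < size GL)%N by rewrite index_mem.
rewrite (bigD1 (Ordinal hq)) //= nth_index // eqxx big1 ?addn0 // => q nq.
case: eqP => // e; case/negP: nq; apply/eqP; apply: val_inj => /=.
by rewrite e index_uniq.
Qed.

Lemma sum_count (V : nmodType) (S : seq (nat * Y)) (F : Y -> V) :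
  (forall p, p \in S -> p.2 \in GL) ->
  \sum_(p <- S) F p.2 =
  \sum_(q < size GL) F (nth y0 GL q) *+ count (fun p => p.2 == nth y0 GL q) S.
Proof.
elim: S => [|p S IH] H.
  by rewrite big_nil big1 // => q _; rewrite mulr0n.
have H' : forall p, p \in S -> p.2 \in GL by move=> x xS; apply: H; rewrite inE xS orbT.
rewrite big_cons IH // -(sum_ind F (H p (mem_head _ _))) -big_split /=.
apply: eq_bigr => q _; rewrite mulrnDr; case: eqP => [_|_].
  by rewrite mulr1n.
by rewrite mulr0n add0r.
Qed.

Lemma count_total (S : seq (nat * Y)) :
  (forall p, p \in S -> p.2 \in GL) ->
  (\sum_(q < size GL) count (fun p => p.2 == nth y0 GL q) S)%N = size S.
Proof.
elim: S => [|p S IH] H; first by rewrite big1.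
have H' : forall p, p \in S -> p.2 \in GL by move=> x xS; apply: H; rewrite inE xS orbT.
rewrite /= big_split /= IH // sum_indn //; exact: H (mem_head _ _).
Qed.

End Counting.

Lemma sum_blocks_ord (Y : eqType) (V : nmodType) N (S : seq (nat * Y)) (G : Y -> V) :
  (forall p, p \in S -> (p.1 < N)%N) ->
  \sum_(i < N) \sum_(p <- S | p.1 == i) G p.2 = \sum_(p <- S) G p.2.
Proof.
elim: S => [|p S IH] H.
  by rewrite big_nil big1 // => i _; rewrite big_nil.
have H' : forall p, p \in S -> (p.1 < N)%N by move=> x xS; apply: H; rewrite inE xS orbT.
rewrite big_cons -IH //.
rewrite (eq_bigr (fun i : 'I_N => (if p.1 == i then G p.2 else 0) +
           \sum_(p <- S | p.1 == i) G p.2)); last first.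
  by move=> i _; rewrite big_cons; case: eqP; rewrite ?add0r.
rewrite big_split /=; congr (_ + _).
have hp := H p (mem_head _ _).
rewrite (bigD1 (Ordinal hp)) //= eqxx big1 ?addr0 // => i ni.
case: eqP => // e; case/negP: ni; apply/eqP; exact: val_inj.
Qed.


Fixpoint maxlist (F : (nat -> nat) -> nat) (l : list (nat -> nat)) : nat :=
  match l with nil => 0%N | cons h l => maxn (F h) (maxlist F l) end.

Lemma maxlist_ge F l h : List.In h l -> (F h <= maxlist F l)%N.
Proof. elim: l => [|x l IH] //= [->|/IH]; lia. Qed.

Section Main.
Variables (da db s n : nat) (A : 'M[int]_(da, n)) (B : 'M[int]_(db, n))
  (C : 'M[int]_(s, n)).
Local Notation m := (n + s)%N.
Local Notation D := (Dm A C).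
Local Notation Bp := (Bpm s B).

Lemma main_bound : exists (GL : seq 'cV[int]_m) (g : nat),
  forall N (z : 'cV[int]_(N * n + N * s)), prim (bigmx A B C N) z ->
  exists T : seq (nat * 'cV[int]_m), (size T <= g)%N /\
    (forall p, p \in T -> (p.1 < N)%N /\ p.2 \in GL) /\
    z = unbrick N (fun i => \sum_(p <- T | p.1 == i) p.2).
Proof.
have [GL0 HGL0] := prims_finite D.
pose GL := undup GL0.
have uGL : uniq GL := undup_uniq GL0.
have HGL : forall w, prim D w -> w \in GL by move=> w /HGL0; rewrite mem_undup.
pose M := size GL.
pose ZS (c : nat -> nat) := \sum_(q < M) (Bp *m GL`_q) *+ c q = 0.
pose MZ (c : nat -> nat) := (exists q, (q < M)%N /\ c q != 0%N) /\ ZS c /\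
  forall c', lek M c' c -> (exists q, (q < M)%N /\ c' q != 0%N) -> ZS c' -> eqk M c' c.
have [l Hl] : covered M MZ.
  apply: dickson => c1 c2 [nz1 [Z1 _]] [nz2 [_ H2]] le; exact: H2 le nz1 Z1.
pose g := maxlist (fun h => \sum_(q < M) h q)%N l.
have Hg : forall c, MZ c -> (\sum_(q < M) c q <= g)%N.
  move=> c /Hl [h [hin E]].
  rewrite (eq_bigr (fun q : 'I_M => h q)); last by move=> q _; apply: E.
  exact: (maxlist_ge (fun h => \sum_(q < M) h q)%N hin).
exists GL, g => N z pz.
have [zn0 [Mz pzz]] := pz.
have [Dw Bw] := (bigker A B C z).1 Mz.
have decs : forall i, exists L : seq 'cV[int]_m, (i < N)%N ->
    (forall x, x \in L -> prim D x /\ cf x (brick z i)) /\ brick z i = \sum_(x <- L) x.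
  move=> i; case: (ltnP i N) => hi; last by exists [::].
  by have [L HL] := decomp (Dw i hi); exists L.
pose L i := proj1_sig (constructive_indefinite_description _ (decs i)).
have HL : forall i, (i < N)%N -> (forall x, x \in L i -> prim D x /\ cf x (brick z i)) /\
    brick z i = \sum_(x <- L i) x.
  by move=> i; exact: (proj2_sig (constructive_indefinite_description _ (decs i))).
pose T := flatten [seq [seq (i, x) | x <- L i] | i <- index_iota 0 N].
have memT : forall p, p \in T -> (p.1 < N)%N /\ p.2 \in L p.1.
  move=> p /flattenP [t /mapP [i hi ->]] /mapP [x hx ->] /=.
  by move: hi; rewrite mem_index_iota => hi; split => //; lia.
have T1 : forall p, p \in T -> (p.1 < N)%N /\ prim D p.2 /\ cf p.2 (brick z p.1).
  by move=> p /memT [h1 h2]; split => //; apply: (HL _ h1).1.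
have TGL : forall p, p \in T -> p.2 \in GL.
  by move=> p /T1 [_ [h _]]; apply: HGL.
have T2 : forall i, (i < N)%N -> \sum_(p <- T | p.1 == i) p.2 = brick z i.
  move=> i hi; rewrite big_flatten /= big_map.
  rewrite (eq_bigr (fun i' => if i' == i then \sum_(x <- L i) x else 0)); last first.
    move=> i' _; rewrite big_map /=; case: eqP => [->|ne]; first by [].
    by rewrite big_pred0 // => x /=; apply/eqP.
  by rewrite sum_one // -(HL i hi).2.
have zT : z = unbrick N (fun i => \sum_(p <- T | p.1 == i) p.2).
  rewrite -{1}(unbrick_brick z); apply: unbrick_ext => i hi; by rewrite T2.
exists T; split; last by split => // p pT; split; [exact: (T1 p pT).1 | exact: TGL].
pose cnt (S : seq (nat * 'cV[int]_m)) (q : nat) :=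
  count (fun p => p.2 == GL`_q) S.
have BK : forall S, (forall p, p \in S -> (p.1 < N)%N /\ p.2 \in GL) ->
    \sum_(i < N) Bp *m (\sum_(p <- S | p.1 == i) p.2) = \sum_(q < M) (Bp *m GL`_q) *+ cnt S q.
  move=> S HS; rewrite (eq_bigr (fun i : 'I_N => \sum_(p <- S | p.1 == i) Bp *m p.2));
    last by move=> i _; rewrite mulmx_sumr.
  rewrite (sum_blocks_ord (fun y => Bp *m y)); last by move=> p /HS [].
  by rewrite (@sum_count _ GL 0 uGL _ S (fun y => Bp *m y)) //; move=> p /HS [].
pose zm msk := unbrick N (fun i => \sum_(p <- mask msk T | p.1 == i) p.2).
have bz : forall msk i, (i < N)%N -> brick (zm msk) i = \sum_(p <- mask msk T | p.1 == i) p.2.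
  by move=> msk i hi; rewrite brick_unbrick.
have cfz : forall msk, size msk = size T -> cf (zm msk) z.
  move=> msk sz; apply: cf_bricks => i hi; rewrite bz //.
  apply: subsum_cf => //; last exact: T2.
  by move=> p pT /eqP <-; exact: (T1 p pT).2.2.
have kerz : forall msk, ZS (cnt (mask msk T)) -> bigmx A B C N *m zm msk = 0.
  move=> msk Z; apply/bigker; split.
    move=> i hi; rewrite bz // mulmx_sumr big_seq_cond big1 // => p /andP [/mem_mask pT _].
    by have [_ [[_ []]]] := T1 p pT.
  rewrite (eq_bigr (fun i : 'I_N => Bp *m (\sum_(p <- mask msk T | p.1 == i) p.2)));
    last by move=> i _; rewrite bz.
  rewrite BK //; move=> p /mem_mask pT; split; [exact: (T1 p pT).1 | exact: TGL].
have nzz : forall msk i p, p \in mask msk T -> p.1 == i ->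
    \sum_(x <- mask msk T | x.1 == i) x.2 != 0.
  move=> msk i p pm pi; apply: (@sum_nz _ _ _ _ _ (brick z i) p) => //.
    by have [_ [[]]] := T1 p (mem_mask pm).
  by move=> x /mem_mask xT /eqP <-; exact: (T1 x xT).2.2.
have MZc : MZ (cnt T).
  split.
    have [i hi bi] := brick_nz zn0.
    have [p pT pi] : exists2 p, p \in T & p.1 == i.
      apply: NNPP => nex; move: bi; rewrite -T2 // big_seq_cond big1 ?eqxx //.
      move=> p /andP [pT pi]; case: nex; by exists p.
    exists (index p.2 GL); split; first by rewrite index_mem TGL.
    rewrite -lt0n /cnt -has_count; apply/hasP; exists p => //.
    by rewrite nth_index // TGL.
  split.
    rewrite /ZS -BK; last by move=> p pT; split; [exact: (T1 p pT).1 | exact: TGL].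
    by rewrite (eq_bigr (fun i : 'I_N => Bp *m brick z i)) // => i _; rewrite T2.
  move=> c' le [q0 [hq0 nz0]] Zc'.
  pose mu y := if y \in GL then c' (index y GL) else 0%N.
  have [msk [sz Hm]] : exists msk, size msk = size T /\
      forall y, count (fun p => p.2 == y) (mask msk T) = mu y.
    apply: select => y; rewrite /mu; case: ifP => yin //.
    have := le (index y GL); rewrite /cnt /M index_mem yin nth_index //; apply => //.
  have cm : forall q, (q < M)%N -> cnt (mask msk T) q = c' q.
    by move=> q hq; rewrite /cnt Hm /mu mem_nth // index_uniq.
  have Zm : ZS (cnt (mask msk T)).
    by rewrite /ZS (eq_bigr (fun q : 'I_M => (Bp *m GL`_q) *+ c' q)) // => q _; rewrite cm.
  have zmz : zm msk = z.
    apply: pzz; [exact: kerz | | exact: cfz].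
    have : (0 < cnt (mask msk T) q0)%N by rewrite cm //; lia.
    rewrite /cnt -has_count => /hasP [p pm _].
    apply/negP => /eqP e0.
    have hp : (p.1 < N)%N by exact: (T1 p (mem_mask pm)).1.
    have := nzz msk p.1 p pm (eqxx _); rewrite -bz // e0.
    by rewrite brick0 eqxx.
  move=> q hq; apply: NNPP => ne.
  have lt : (c' q < cnt T q)%N by have := le q hq; lia.
  have : (0 < cnt (mask (map negb msk) T) q)%N.
    have E := count_compl (fun p => p.2 == GL`_q) sz.
    change (cnt (mask msk T) q + cnt (mask (map negb msk) T) q = cnt T q)%N in E.
    by rewrite cm // in E; lia.
  rewrite /cnt -has_count => /hasP [p pm _].
  have hp : (p.1 < N)%N by exact: (T1 p (mem_mask pm)).1.
  have nz := nzz _ p.1 p pm (eqxx _).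
  have hsum := mask_compl (fun x => x.1 == p.1) (fun x => x.2) sz.
  rewrite T2 // -(bz msk) // zmz in hsum.
  move/negP: nz; apply; apply/eqP; apply: (addrI (brick z p.1)).
  by rewrite addr0.
rewrite -(@count_total _ GL 0 uGL T TGL); exact: (Hg (cnt T) MZc).
Qed.

End Main.


Definition pb (P : Prop) : bool := if excluded_middle_informative P then true else false.
Lemma pbE (P : Prop) : pb P <-> P.
Proof. by rewrite /pb; case: excluded_middle_informative. Qed.

Fixpoint tuples (X : Type) (P : seq X) (k : nat) : seq (seq X) :=
  if k is k'.+1 then [seq x :: t | x <- P, t <- tuples P k'] else [:: [::]].

Lemma size_tuples (X : Type) (P : seq X) k : size (tuples P k) = (size P ^ k)%N.
Proof. by elim: k => [|k IH] //=; rewrite size_allpairs IH expnS. Qed.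

Lemma mem_tuples (X : eqType) (P : seq X) k t :
  size t = k -> (forall x, x \in t -> x \in P) -> t \in tuples P k.
Proof.
elim: k t => [|k IH] [|x t] //= [e] H.
apply: (allpairs_f (fun x t => x :: t)); first by apply: H; rewrite mem_head.
by apply: IH => // y yt; apply: H; rewrite inE yt orbT.
Qed.

Lemma tuples_mem (X : eqType) (P : seq X) k t :
  t \in tuples P k -> size t = k /\ (forall x, x \in t -> x \in P).
Proof.
elim: k t => [|k IH] t /=; first by rewrite inE => /eqP ->.
move=> /allpairsP [[x t'] [/= xP t'T ->]]; have [e H] := IH _ t'T.
by split; [rewrite /= e|move=> y; rewrite inE => /orP [/eqP ->|/H]].
Qed.

Lemma sum_mask_le (X : Type) (F : X -> nat) m s :
  (\sum_(x <- mask m s) F x <= \sum_(x <- s) F x)%N.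
Proof.
elim: s m => [|x s IH] [|b m] //=; first by rewrite big_nil.
case: b; rewrite !big_cons ?leq_add2l //.
by apply: leq_trans (IH m) _; rewrite leq_addl.
Qed.

Lemma sum_subseq_le (X : eqType) (F : X -> nat) s1 s2 :
  subseq s1 s2 -> (\sum_(x <- s1) F x <= \sum_(x <- s2) F x)%N.
Proof. by move=> /subseqP [m _ ->]; apply: sum_mask_le. Qed.

Lemma sum_bound (X : eqType) (F : X -> nat) s b :
  (forall x, x \in s -> F x <= b)%N -> (\sum_(x <- s) F x <= size s * b)%N.
Proof.
elim: s => [|x s IH] H; first by rewrite big_nil.
rewrite big_cons /= mulSn leq_add //; first by apply: H; rewrite mem_head.
by apply: IH => y ys; apply: H; rewrite inE ys orbT.
Qed.

Lemma up_log_mono a b : (a <= b)%N -> (up_log 2 a <= up_log 2 b)%N.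
Proof. by move=> h; apply: up_log_min => //; apply: leq_trans h (up_logP _ _). Qed.

Lemma abs_sum_le (X : eqType) (s : seq X) (P : pred X) (f : X -> int) b :
  (forall x, x \in s -> absz (f x) <= b)%N -> (absz (\sum_(x <- s | P x) f x)%R <= size s * b)%N.
Proof.
elim: s => [|x s IH] H; first by rewrite big_nil.
have {}IH := IH (fun y ys => H y (mem_behead (s := x :: s) ys)).
have Hx := H x (mem_head _ _).
rewrite big_cons /= mulSn; case: (P x).
  move: Hx IH; set S := (\sum_(y <- s | P y) f y)%R; clearbody S.
  move: (f x) => a; lia.
by apply: leq_trans IH _; rewrite leq_addl.
Qed.

Unset Implicit Arguments.
Theorem lemma2 (da db s n : nat) (A : 'M[int]_(da, n)) (B : 'M[int]_(db, n))
  (C : 'M[int]_(s, n)) :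
  exists c e : nat, forall N : nat, (0 < N)%N ->
    exists G : seq 'cV[int]_(N * n + N * s),
      uniq G /\
      (forall z, z \in G <-> graver (bigmx A B C N) z) /\
      (\sum_(g <- G) enc_vec g <= c * N ^ e)%N.
Proof.
have [GL [g Hmain]] := main_bound A B C.
pose K0 := (\max_(x <- GL) \max_(j < n + s) absz (x j ord0))%N.
have HK : forall x j, x \in 0 :: GL -> (absz (vat x j) <= K0)%N.
  move=> x j; rewrite inE => /orP [/eqP ->|xGL]; first by rewrite vat0.
  case: (ltnP j (n + s)) => hj; last by rewrite vatN.
  rewrite (vatE _ (Ordinal hj)).
  have h1 := @leq_bigmax_seq _ GL (fun _ => true)
    (fun y : 'cV[int]_(n + s) => (\max_(j < n + s) absz (y j ord0))%N) x xGL isT.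
  have h2 := @leq_bigmax _ (fun j : 'I_(n + s) => absz (x j ord0)) (Ordinal hj).
  exact: leq_trans h2 h1.
pose E := (1 + up_log 2 (g * K0).+1)%N.
exists ((size GL).+1 ^ g * (n + s) * E)%N, g.+1 => N hN.
pose P := [seq (i, x) | i <- iota 0 N, x <- (0 : 'cV[int]_(n + s)) :: GL].
pose sumf (t : seq (nat * 'cV[int]_(n + s))) := fun i => \sum_(p <- t | p.1 == i) p.2.
pose cands := [seq unbrick N (sumf t) | t <- tuples P g].
exists [seq z <- undup cands | pb (graver (bigmx A B C N) z)].
split; first by rewrite filter_uniq // undup_uniq.
split.
  move=> z; rewrite mem_filter mem_undup; split; first by move=> /andP [/pbE].
  move=> gz; apply/andP; split; first exact/pbE.
  have pz := (graver_prim _ _).1 gz.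
  have [T [sT [HT zT]]] := Hmain N z pz.
  pose t := T ++ nseq (g - size T) (0%N, 0 : 'cV[int]_(n + s)).
  apply/mapP; exists t.
    apply: mem_tuples; first by rewrite size_cat size_nseq subnKC.
    move=> p; rewrite mem_cat => /orP [pT|].
      have [h1 h2] := HT p pT; case: p pT h1 h2 => i x /= _ h1 h2.
      by apply: (allpairs_f (fun i x => (i, x))); rewrite ?mem_iota ?inE ?h2 ?orbT //; lia.
    rewrite mem_nseq => /andP [_ /eqP ->].
    by apply: (allpairs_f (fun i x => (i, x))); rewrite ?mem_iota ?inE ?eqxx //; lia.
  rewrite {1}zT; apply: unbrick_ext => i _.
  rewrite /sumf /t big_cat /= [X in (_ + X)%R]big1_seq ?addr0 // => p /andP [_].
  by rewrite mem_nseq => /andP [_ /eqP ->].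
apply: leq_trans (sum_subseq_le _ (subseq_trans (filter_subseq _ _) (undup_subseq cands))) _.
apply: (@leq_trans (size cands * ((N * n + N * s) * E))).
  apply: sum_bound => z /mapP [t tT ->].
  have [st Ht] := tuples_mem tT.
  have bnd : forall i j, (absz (vat (sumf t i) j) <= g * K0)%N.
    move=> i j; rewrite /sumf vat_sum -st; apply: abs_sum_le => p pt.
    have := Ht p pt => /allpairsP [[i' x] [_ xin ->]] /=.
    exact: HK.
  rewrite /enc_vec (@leq_trans (\sum_(i < N * n + N * s) E)%N) //.
    apply: leq_sum => i _.
    rewrite /enc_int /E leq_add2l; apply: up_log_mono; rewrite ltnS mxE.
    by case: ifP => _; apply: bnd.
  by rewrite sum_nat_const card_ord.
rewrite size_map size_tuples size_allpairs size_iota /=.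
rewrite expnMn expnS.
nia.
Qed.
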